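(* Assume that every intermediary $i\in\mathcal V$ satisfies $\sum_{j\in\delta_{\mathrm{in}}(i)}w_{ij}r_j\ge r_i$. Then for all $t\in\mathbb N$, $$\mathbf m^t\le\mathbf m^{t+1}\quad\text{and}\quad \mathbb E[\mathcal L(\mathbf X^t)]\le\mathbb E[\mathcal L(\mathbf X^{t+1})],$$ and consequently $\mathbf m\ge\mathbf r$ and $\mathbb E[\mathcal L(\mathbf X^\infty)]\ge\mathbb E[\mathcal L(\mathbf X^0)]$. Moreover, for every intermediary $i$, if $\alpha_i$ is regarded as a variable in $(0,1)$ with all other parameters fixed, then $\mathbf m$ is differentiable in $\alpha_i$ and $$\frac{\partial\mathbf m}{\partial\alpha_i}=(\mathbf I-\mathbf A\mathbf W)^{-1}\,\mathbf e_i\mathbf e_i^\top\,\big[\mathbf W\mathbf m-\mathbf r\big]\ \ge\ \mathbf 0,$$ where $\mathbf e_i$ is the $i$-th standard basis vector (so $\mathbf e_i\mathbf e_i^\top=\partial\mathbf A/\partial\alpha_i$).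
   Context: A contractor network is a finite directed graph $G=(\mathcal V,\mathcal E)$ with $n=|\mathcal V|$ nodes, without multiple edges (self-loops and directed cycles allowed), in which every node has at least one incident edge. For $i\in\mathcal V$ let $\delta_{\mathrm{in}}(i)=\{j:(j,i)\in\mathcal E\}$ and $\delta_{\mathrm{out}}(i)=\{k:(i,k)\in\mathcal E\}$. A node $i$ is a pure principal if $\delta_{\mathrm{in}}(i)=\emptyset$, a pure obligee if $\delta_{\mathrm{out}}(i)=\emptyset$, and an intermediary otherwise. Each edge $(j,i)\in\mathcal E$ carries a weight $w_{ij}>0$; $w_{ij}=0$ if $(j,i)\notin\mathcal E$; for every $i$ with $\delta_{\mathrm{in}}(i)\neq\emptyset$, $\sum_{j\in\delta_{\mathrm{in}}(i)}w_{ij}=1$; $\mathbf W=(w_{ij})$. Risk scores: $r_i\in(0,1)$ if $i$ is not a pure obligee and $r_i=0$ for pure obligees; $\mathbf r=(r_i)$. Propagation parameters: $\alpha_i=0$ for pure principals, $\alpha_i=1$ for pure obligees, $\alpha_i\in(0,1)$ for intermediaries; $\mathbf A=\mathrm{diag}(\alpha_i)$. Failure process $(\mathbf X^t)_{t\in\mathbb N}$ on $\{0,1\}^n$: the $X_i^0$ are independent $\mathrm{Bernoulli}(r_i)$; for $t\ge0$, conditionally on $(\mathbf X^0,\dots,\mathbf X^t)$ the $X_i^{t+1}$ are independent with $X_i^{t+1}\sim\mathrm{Bernoulli}\big((1-\alpha_i)r_i+\alpha_i\sum_{j\in\delta_{\mathrm{in}}(i)}w_{ij}X_j^t\big)$.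 $m_i^t=\mathbb E[X_i^t]$, $\mathbf m^t=(m_i^t)$, and $\mathbf m=\lim_t\mathbf m^t$, which exists and equals $(\mathbf I-\mathbf A\mathbf W)^{-1}(\mathbf I-\mathbf A)\mathbf r$ (with $\mathbf I-\mathbf A\mathbf W$ invertible). Losses: $\beta_i\ge0$ for each node, with $\beta_i=0$ for pure obligees; $\mathcal L(\mathbf x)=\sum_i\beta_ix_i=\beta^\top\mathbf x$, and $\mathbb E[\mathcal L(\mathbf X^\infty)]:=\lim_{t\to\infty}\mathbb E[\mathcal L(\mathbf X^t)]=\beta^\top\mathbf m$. Vector inequalities are entrywise. *)

(* Defs.v *)
From HB Require Import structures.
From mathcomp Require Import all_boot all_order all_algebra.
From mathcomp Require Import all_classical all_reals all_analysis.
Set Implicit Arguments. Unset Strict Implicit. Unset Printing Implicit Defensive.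
Import Order.TTheory GRing.Theory Num.Theory.
Local Open Scope ring_scope.

Section ContractorNetwork.
Variables (R : realType) (n : nat).

(* Directed graph on 'I_n: [E j i] means the edge (j,i) is present. *)
Definition pure_principal (E : rel 'I_n) (i : 'I_n) : bool := [forall j, ~~ E j i].
Definition pure_obligee (E : rel 'I_n) (i : 'I_n) : bool := [forall k, ~~ E i k].
Definition intermediary (E : rel 'I_n) (i : 'I_n) : bool :=
  ~~ pure_principal E i && ~~ pure_obligee E i.

Definition contractor_network (E : rel 'I_n) (W : 'M[R]_n) (r alpha beta : 'I_n -> R) : Prop :=
  ((forall i, exists j, E j i || E i j)) /\
  ((forall i j, E j i -> 0 < W i j) /\ (forall i j, ~~ E j i -> W i j = 0) /\
   (forall i, ~~ pure_principal E i -> \sum_(j < n) W i j = 1)) /\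
  ((forall i, ~~ pure_obligee E i -> 0 < r i < 1) /\
   (forall i, pure_obligee E i -> r i = 0)) /\
  ((forall i, pure_principal E i -> alpha i = 0) /\
   (forall i, pure_obligee E i -> alpha i = 1) /\
   (forall i, intermediary E i -> 0 < alpha i < 1)) /\
  ((forall i, 0 <= beta i) /\ (forall i, pure_obligee E i -> beta i = 0)).

(* Failure process: a Markov chain on {0,1}^n = {ffun 'I_n -> bool}. *)
Definition bern (p : R) (b : bool) : R := if b then p else 1 - p.

Definition state := {ffun 'I_n -> bool}.

Definition law0 (r : 'I_n -> R) (x : state) : R := \prod_(i < n) bern (r i) (x i).

(* success probability of node i at time t+1 given X^t = x *)
Definition pfail (W : 'M[R]_n) (r alpha : 'I_n -> R) (x : state) (i : 'I_n) : R :=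
  (1 - alpha i) * r i + alpha i * \sum_(j < n) W i j * (x j)%:R.

Definition trans (W : 'M[R]_n) (r alpha : 'I_n -> R) (x y : state) : R :=
  \prod_(i < n) bern (pfail W r alpha x i) (y i).

Fixpoint law (W : 'M[R]_n) (r alpha : 'I_n -> R) (t : nat) (y : state) : R :=
  match t with
  | 0 => law0 r y
  | t'.+1 => \sum_(x : state) law W r alpha t' x * trans W r alpha x y
  end.

Definition mt (W : 'M[R]_n) (r alpha : 'I_n -> R) (t : nat) (i : 'I_n) : R :=
  \sum_(x : state) law W r alpha t x * (x i)%:R.

Definition expLoss (W : 'M[R]_n) (r alpha beta : 'I_n -> R) (t : nat) : R :=
  \sum_(x : state) law W r alpha t x * \sum_(i < n) beta i * (x i)%:R.

Definition Amx (alpha : 'I_n -> R) : 'M[R]_n := diag_mx (\row_k alpha k).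
Definition rcol (r : 'I_n -> R) : 'cV[R]_n := \col_k r k.

Definition mlim (W : 'M[R]_n) (r alpha : 'I_n -> R) : 'cV[R]_n :=
  invmx (1%:M - Amx alpha *m W) *m ((1%:M - Amx alpha) *m rcol r).

Definition alpha_upd (alpha : 'I_n -> R) (i : 'I_n) (a : R) : 'I_n -> R :=
  fun k => if k == i then a else alpha k.

End ContractorNetwork.

(* Main.v *)
Require Import Defs.
From HB Require Import structures.
From mathcomp Require Import all_boot all_order all_algebra.
From mathcomp Require Import all_classical all_reals all_analysis.
From mathcomp Require Import ring lra.
Import Order.TTheory GRing.Theory Num.Theory.
Local Open Scope ring_scope.

Module Helpers.
Set Implicit Arguments. Unset Strict Implicit. Unset Printing Implicit Defensive.
Import numFieldNormedType.Exports.
Local Open Scope classical_set_scope.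
Lemma is_derive_quot (R : realType) (f g : R -> R) (a : R) :
  (\forall b \near a, f b - f a = (b - a) * g b) -> {for a, continuous g} ->
  is_derive a 1 f (g a).
Proof.
move=> Hn Hg.
have H : (fun h : R => h^-1 *: ((f \o shift a) (h *: 1) - f a)) @ 0^' --> g a.
  have Hg0 : (g \o shift a) @ 0^' --> g a.
    apply: cvg_within_filter.
    by rewrite cvg_comp_shift add0r.
  apply: cvg_trans Hg0; apply: near_eq_cvg.
  have : \forall h \near (0:R), f (h + a) - f a = h * g (h + a).
    rewrite (near_shift 0 a) in Hn.
    move: Hn; apply: filterS => h /=; by rewrite subr0 addrK.
  move=> /(@nbhs_dnbhs _ 0); apply: filter_app; near=> h => /=.
  rewrite /GRing.scale /= mulr1 => ->; rewrite mulrA mulVf ?mul1r //.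
  by near: h; exact: nbhs_dnbhs_neq.
apply: DeriveDef; first by apply/cvgP: H.
by apply: cvg_lim.
Unshelve. all: by end_near. Qed.

Local Close Scope classical_set_scope.
Section Prob.
Variables (R : realType) (n : nat).

Lemma sum_prod_ffun (G : 'I_n -> bool -> R) :
  \sum_(y : state n) \prod_(i < n) G i (y i) = \prod_(i < n) (G i true + G i false).
Proof.
rewrite -bigA_distr_bigA; apply: eq_bigr => i _; by rewrite big_bool.
Qed.

Lemma sum_bern (p : 'I_n -> R) :
  \sum_(y : state n) \prod_(i < n) bern (p i) (y i) = 1.
Proof.
rewrite (sum_prod_ffun (fun i b => bern (p i) b)) big1 // => i _; rewrite /bern; by rewrite addrC subrK.
Qed.

Lemma mean_bern (p : 'I_n -> R) (k : 'I_n) :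
  \sum_(y : state n) (\prod_(i < n) bern (p i) (y i)) * (y k)%:R = p k.
Proof.
transitivity (\sum_(y : state n) \prod_(i < n)
   (bern (p i) (y i) * (if i == k then (y i)%:R else 1))).
  apply: eq_bigr => y _; rewrite big_split /=; congr (_ * _).
  rewrite (bigD1 k) //= eqxx big1 ?mulr1 // => j /negbTE ->; by [].
rewrite (sum_prod_ffun (fun i b => bern (p i) b * (if i == k then b%:R else 1))) (bigD1 k) //= big1 => [|j /negbTE ->].
  by rewrite eqxx /bern mulr1 mulr0 addr0 mulr1.
by rewrite /bern !mulr1 addrC subrK.
Qed.

Variables (W : 'M[R]_n) (r alpha : 'I_n -> R).

Lemma law_sum t : \sum_(x : state n) law W r alpha t x = 1.
Proof.
elim: t => [|t IH] /=; first exact: sum_bern.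
rewrite exchange_big /= -[RHS]IH; apply: eq_bigr => x _.
by rewrite -mulr_sumr /trans sum_bern mulr1.
Qed.

Lemma mt0 k : mt W r alpha 0 k = r k.
Proof. exact: mean_bern. Qed.

Lemma mtS t k : mt W r alpha t.+1 k =
  (1 - alpha k) * r k + alpha k * \sum_(j < n) W k j * mt W r alpha t j.
Proof.
rewrite /mt /=.
rewrite (eq_bigr (fun y : state n => \sum_(x : state n) law W r alpha t x * trans W r alpha x y * (y k)%:R)); last first.
  move=> y _. rewrite big_distrl. done.
rewrite exchange_big /=.
under eq_bigr do under eq_bigr do rewrite -mulrA.
under eq_bigr do rewrite -mulr_sumr /trans mean_bern /pfail.
under eq_bigr => x _ do rewrite mulrDr.
rewrite big_split /= -big_distrl /= law_sum mul1r; congr (_ + _).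
under eq_bigr => x _ do rewrite mulrCA.
rewrite -big_distrr; congr (_ * _).
rewrite (eq_bigr (fun x : state n => \sum_(j<n) law W r alpha t x * (W k j * (x j)%:R))); last by move=> x _; rewrite big_distrr.
rewrite exchange_big /=; apply: eq_bigr => j _.
rewrite big_distrr; apply: eq_bigr => x _ /=; by rewrite mulrCA.
Qed.

Lemma expLossE beta t : expLoss W r alpha beta t = \sum_(i < n) beta i * mt W r alpha t i.
Proof.
rewrite /expLoss /mt.
under eq_bigr do rewrite mulr_sumr.
rewrite exchange_big /=; apply: eq_bigr => i _.
rewrite mulr_sumr; apply: eq_bigr => x _; by rewrite mulrCA.
Qed.

End Prob.

Section Key.
Variables (R : realType) (n : nat) (E : rel 'I_n) (W : 'M[R]_n).
Hypothesis Hinc : forall i, exists j, E j i || E i j.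
Hypothesis HWp : forall i j, E j i -> 0 < W i j.
Hypothesis HW0 : forall i j, ~~ E j i -> W i j = 0.
Hypothesis HWs : forall i, ~~ pure_principal E i -> \sum_(j < n) W i j = 1.

Definition valid_alpha (alpha : 'I_n -> R) :=
  [/\ (forall i, pure_principal E i -> alpha i = 0),
      (forall i, pure_obligee E i -> alpha i = 1) &
      (forall i, intermediary E i -> 0 < alpha i < 1)].

Lemma M_entry (alpha : 'I_n -> R) (x : 'cV[R]_n) k :
  ((1%:M - Amx alpha *m W) *m x) k 0 = x k 0 - alpha k * \sum_(j < n) W k j * x j 0.
Proof.
by rewrite mulmxBl mul1mx -mulmxA /Amx mul_diag_mx !mxE.
Qed.

Lemma W_ge0 i j : 0 <= W i j.
Proof. by case: (boolP (E j i)) => h; [exact/ltW/HWp | rewrite HW0]. Qed.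

Lemma pp_W0 k j : pure_principal E k -> W k j = 0.
Proof. by move=> /forallP /(_ j) /HW0. Qed.

Lemma classify k : [\/ pure_principal E k, pure_obligee E k | intermediary E k].
Proof.
rewrite /intermediary.
case: (boolP (pure_principal E k)) => h1; first by constructor 1.
case: (boolP (pure_obligee E k)) => h2; first by constructor 2.
by constructor 3.
Qed.

Lemma alpha_ge0 alpha : valid_alpha alpha -> forall k, 0 <= alpha k.
Proof.
case=> h1 h2 h3 k; case: (classify k) => h.
- by rewrite h1.
- by rewrite h2.
- by case/andP: (h3 _ h) => /ltW.
Qed.

Lemma key_nonneg alpha : valid_alpha alpha -> forall x : 'cV[R]_n,
  (forall k, 0 <= ((1%:M - Amx alpha *m W) *m x) k 0) -> forall k, 0 <= x k 0.
Proof.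
move=> Hv x Hc k0; rewrite leNgt; apply/negP => Hneg.
case: Hv => h1 h2 h3.
pose m := Order.arg_min (disp:=ring_display) k0 xpredT (fun k => x k 0).
have [Hm Hmin] : (x m 0 < 0) /\ (forall j, x m 0 <= x j 0).
  rewrite /m; case: arg_minP => //= i _ Hi; split; last by move=> j; exact: Hi.
  by apply: le_lt_trans Hneg; apply: Hi.
have Hsum : forall k, ~~ pure_principal E k -> x m 0 <= \sum_(j < n) W k j * x j 0.
  move=> k Hk; rewrite -[x m 0]mul1r -(HWs Hk) big_distrl /=.
  by apply: ler_sum => j _; apply: ler_wpM2l; [exact: W_ge0 | exact: Hmin].
have HA : forall k, x k 0 = x m 0 -> pure_obligee E k.
  move=> k Hk; case: (classify k) => // h.
  - have := Hc k; rewrite M_entry h1 // mul0r subr0 Hk => H.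
    by move: Hm; rewrite ltNge H.
  - have hpp : ~~ pure_principal E k by case/andP: h.
    have := Hc k; rewrite M_entry Hk subr_ge0 => H.
    have := Hsum _ hpp; case/andP: (h3 _ h) => a0 a1 H2.
    have : alpha k * x m 0 <= alpha k * \sum_(j < n) W k j * x j 0.
      by apply: ler_wpM2l => //; exact: ltW.
    move=> H3; nra.
have Hpo := HA m erefl.
have hpp : ~~ pure_principal E m.
  apply/negP => hp; have := h1 _ hp; rewrite h2 //; move/eqP; rewrite oner_eq0 //.
case: (Hinc m) => j /orP [Hjm | Hmj]; last first.
  by move/forallP: Hpo => /(_ j); rewrite Hmj.
have := Hc m; rewrite M_entry h2 // mul1r subr_ge0 => H.
have Hxj : x j 0 = x m 0.
  apply/eqP; rewrite eq_le Hmin andbT.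
  have H0 : \sum_(l < n) W m l * (x l 0 - x m 0) <= 0.
    under eq_bigr => l _ do rewrite mulrBr.
    by rewrite sumrB -big_distrl /= (HWs hpp) mul1r subr_le0.
  have : W m j * (x j 0 - x m 0) <= 0.
    apply: le_trans H0; rewrite (bigD1 j) //= lerDl.
    by apply: sumr_ge0 => l _; apply: mulr_ge0; [exact: W_ge0 | rewrite subr_ge0].
  by rewrite pmulr_rle0 ?subr_le0 //; exact: HWp.
have := HA j Hxj; move/forallP => /(_ m); by rewrite Hjm.
Qed.


Lemma sub_entry (A B : 'cV[R]_n) i j : (A - B) i j = A i j - B i j.
Proof. by rewrite !mxE. Qed.

Lemma scale_entry (A : 'cV[R]_n) s i j : (s *: A) i j = s * A i j.
Proof. by rewrite !mxE. Qed.

Lemma inj_unitmx (A : 'M[R]_n) : (forall x : 'cV[R]_n, A *m x = 0 -> x = 0) -> A \in unitmx.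
Proof.
move=> HA; rewrite -unitmx_tr -row_free_unit -kermx_eq0; apply/eqP/row_matrixP => i.
rewrite row0; set u := row i (kermx A^T).
have Hu : u *m A^T = 0 by rewrite /u -row_mul mulmx_ker row0.
have : A *m u^T = 0 by rewrite -[A]trmxK -trmx_mul Hu trmx0.
by move/HA => /(congr1 trmx); rewrite trmxK trmx0.
Qed.

Lemma M_unit alpha : valid_alpha alpha -> (1%:M - Amx alpha *m W) \in unitmx.
Proof.
move=> Hv; apply: inj_unitmx => x Hx; apply/matrixP => k j; rewrite (ord1 j) mxE.
apply/eqP; rewrite eq_le; apply/andP; split; last first.
  by apply: (key_nonneg Hv) => l; rewrite Hx mxE.
have := @key_nonneg alpha Hv (- x) _ k; rewrite mxE oppr_ge0; apply => l.
by rewrite mulmxN Hx oppr0 mxE.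
Qed.

Lemma rhs_entry alpha (r : 'I_n -> R) k :
  ((1%:M - Amx alpha) *m rcol r) k 0 = (1 - alpha k) * r k.
Proof. by rewrite mulmxBl mul1mx /Amx mul_diag_mx !mxE mulrBl mul1r. Qed.

Variable r : 'I_n -> R.
Hypothesis Hr01 : forall i, ~~ pure_obligee E i -> 0 < r i < 1.
Hypothesis Hr0 : forall i, pure_obligee E i -> r i = 0.
Hypothesis Hr : forall i, intermediary E i -> r i <= \sum_(j < n) W i j * r j.

Lemma r_ge0 i : 0 <= r i.
Proof.
by case: (boolP (pure_obligee E i)) => h; [rewrite Hr0 | case/andP: (Hr01 h) => /ltW].
Qed.

Lemma c0_ge0 alpha : valid_alpha alpha -> forall k,
  0 <= alpha k * (\sum_(j < n) W k j * r j - r k).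
Proof.
move=> Hv k; case: (Hv) => h1 h2 h3; case: (classify k) => h.
- by rewrite h1 // mul0r.
- rewrite h2 // Hr0 // subr0 mul1r; apply: sumr_ge0 => j _.
  by apply: mulr_ge0; [exact: W_ge0 | exact: r_ge0].
- by apply: mulr_ge0; [exact: alpha_ge0 | rewrite subr_ge0; exact: Hr].
Qed.

Lemma mlim_ge_r alpha : valid_alpha alpha -> forall k, r k <= mlim W r alpha k 0.
Proof.
move=> Hv k; have HU := M_unit Hv.
have Mm : (1%:M - Amx alpha *m W) *m mlim W r alpha = (1%:M - Amx alpha) *m rcol r.
  by rewrite /mlim mulKVmx.
have := @key_nonneg alpha Hv (mlim W r alpha - rcol r) _ k.
rewrite !mxE subr_ge0; apply => l.
rewrite mulmxBr Mm sub_entry rhs_entry M_entry mxE.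
under eq_bigr => j _ do rewrite mxE.
have := c0_ge0 Hv l; congr (_ <= _); ring.
Qed.


Lemma valid_upd (alpha : 'I_n -> R) (i : 'I_n) (a : R) : valid_alpha alpha -> intermediary E i -> 0 < a < 1 ->
  valid_alpha (alpha_upd alpha i a).
Proof.
case=> h1 h2 h3 hi ha; split=> k hk; rewrite /alpha_upd; case: eqP => [ek|_].
- by move: hi; rewrite /intermediary -ek hk.
- exact: h1.
- by move: hi; rewrite /intermediary -ek hk andbF.
- exact: h2.
- exact: ha.
- exact: h3.
Qed.

Lemma Amx_upd (alpha : 'I_n -> R) (i : 'I_n) (a b : R) :
  Amx (alpha_upd alpha i b) = Amx (alpha_upd alpha i a) + (b - a) *: delta_mx i i.
Proof.
apply/matrixP => k l; rewrite !mxE /alpha_upd.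
case: (eqVneq k i) => [ek|ki]; case: (eqVneq l i) => [el|li] /=.
- by subst; rewrite eqxx /= !mulr1n mulr1 addrC subrK.
- by subst; rewrite eq_sym (negbTE li) !mulr0n mulr0 addr0.
- by rewrite mulr0 addr0.
- by rewrite mulr0 addr0.
Qed.

Lemma M_full (alpha : 'I_n -> R) (k l : 'I_n) :
  (1%:M - Amx alpha *m W) k l = (k == l)%:R - alpha k * W k l.
Proof. by rewrite /Amx mul_diag_mx !mxE. Qed.

Lemma delta_entry i (y : 'cV[R]_n) l :
  (delta_mx i i *m y) l 0 = if l == i then y i 0 else 0.
Proof.
rewrite mxE (bigD1 i) //= big1 => [|j /negbTE ji]; last by rewrite !mxE ji andbF mul0r.
by rewrite !mxE eqxx andbT addr0; case: (l == i); rewrite ?mul1r ?mul0r.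
Qed.

Lemma diff_identity (alpha : 'I_n -> R) (i : 'I_n) (a b : R) : valid_alpha alpha -> intermediary E i ->
  0 < a < 1 -> 0 < b < 1 ->
  mlim W r (alpha_upd alpha i b) - mlim W r (alpha_upd alpha i a) =
  (b - a) *: (invmx (1%:M - Amx (alpha_upd alpha i b) *m W) *m
     (delta_mx i i *m (W *m mlim W r (alpha_upd alpha i a) - rcol r))).
Proof.
move=> Hv hi ha hb.
have Ua := M_unit (valid_upd Hv hi ha); have Ub := M_unit (valid_upd Hv hi hb).
set Mb := 1%:M - _ *m W in Ub *; set Ma := 1%:M - _ *m W in Ua.
set mb := mlim W r _; set ma := mlim W r _.
have Emb : Mb *m mb = (1%:M - Amx (alpha_upd alpha i b)) *m rcol r by rewrite /mb /mlim mulKVmx.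
have Ema : Ma *m ma = (1%:M - Amx (alpha_upd alpha i a)) *m rcol r by rewrite /ma /mlim mulKVmx.
rewrite -[mb - ma](mulKmx Ub) scalemxAr; congr (_ *m _).
rewrite mulmxBr Emb /Mb (Amx_upd alpha i a b).
set Aa := Amx (alpha_upd alpha i a); set D := delta_mx i i; set s := b - a.
rewrite (opprD Aa (s *: D)) addrA (mulmxBl (1%:M - Aa)) (mulmxDl Aa (s *: D) W).
rewrite (opprD (Aa *m W)) addrA -/Ma (mulmxBl Ma) Ema.
rewrite -!scalemxAl -mulmxA mulmxBr scalerBr.
by rewrite opprB addrC addrA subrK.
Qed.

Lemma deriv_main (alpha : 'I_n -> R) (i : 'I_n) (a : R) (k : 'I_n) :
  valid_alpha alpha -> intermediary E i -> 0 < a < 1 ->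
  is_derive a 1 (fun b : R => mlim W r (alpha_upd alpha i b) k 0)
    ((invmx (1%:M - Amx (alpha_upd alpha i a) *m W) *m
      (delta_mx i i *m (W *m mlim W r (alpha_upd alpha i a) - rcol r))) k 0).
Proof.
move=> Hv hi ha.
set v := delta_mx i i *m _.
pose P : 'M[{poly R}]_n := \matrix_(k, l)
  ((k == l)%:R%:P - (if k == i then 'X else (alpha k)%:P) * (W k l)%:P).
have HP : forall b, map_mx (horner_eval b) P = 1%:M - Amx (alpha_upd alpha i b) *m W.
  move=> b; apply/matrixP => k' l; rewrite M_full !mxE horner_evalE /alpha_upd.
  rewrite hornerD hornerN hornerM !hornerC; case: (k' == i); by rewrite ?hornerX ?hornerC.
pose Np := \sum_(l < n) (\adj P) k l * (v l 0)%:P.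
pose Dp := \det P.
pose h := fun b => Np.[b] * (Dp.[b])^-1.
have Hh : forall b, 0 < b < 1 ->
    (invmx (1%:M - Amx (alpha_upd alpha i b) *m W) *m v) k 0 = h b.
  move=> b hb; have Ub := M_unit (valid_upd Hv hi hb).
  have hdet : \det (map_mx (horner_eval b) P) = (\det P).[b] by rewrite det_map_mx.
  have hadj : \adj (map_mx (horner_eval b) P) = map_mx (horner_eval b) (\adj P).
    by rewrite map_mx_adj.
  rewrite /invmx Ub -HP hadj hdet mxE /h [Np.[b]]horner_sum big_distrl.
  apply: eq_bigr => l _; rewrite !mxE horner_evalE [in RHS]hornerM hornerC /Dp.
  exact: (etrans (esym (mulrA _ _ _)) (mulrC _ _)).
rewrite Hh //.
apply: is_derive_quot.
  near=> b.
  have hb : 0 < b < 1.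
    near: b; have := @near_in_itvoo R 0 1 a; rewrite in_itv /=; move=> /(_ ha).
    by apply: filterS => z; rewrite in_itv.
  have := diff_identity Hv hi ha hb; move/(congr1 (fun M : 'cV[R]_n => M k 0)).
  by rewrite sub_entry scale_entry Hh.
have Ua := M_unit (valid_upd Hv hi ha).
have HD : Dp.[a] != 0.
  have hdet : \det (map_mx (horner_eval a) P) = (\det P).[a] by rewrite det_map_mx.
  by move: Ua; rewrite unitmxE -HP hdet unitfE.
rewrite /h /continuous_at.
apply: cvgM; first exact: continuous_horner.
apply: cvgV => //; exact: continuous_horner.
Unshelve. all: by end_near. Qed.

Lemma dm_ge0 (alpha : 'I_n -> R) (i : 'I_n) (a : R) (k : 'I_n) :
  valid_alpha alpha -> intermediary E i -> 0 < a < 1 ->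
  0 <= (invmx (1%:M - Amx (alpha_upd alpha i a) *m W) *m
      (delta_mx i i *m (W *m mlim W r (alpha_upd alpha i a) - rcol r))) k 0.
Proof.
move=> Hv hi ha; have Hv' := valid_upd Hv hi ha; have U := M_unit Hv'.
apply: (key_nonneg Hv') => l; rewrite mulKVmx // delta_entry.
case: eqP => [_|_] //; rewrite sub_entry !mxE subr_ge0.
apply: le_trans (Hr hi) _; apply: ler_sum => j _.
apply: ler_wpM2l; first exact: W_ge0.
by have := mlim_ge_r Hv' j; rewrite mxE.
Qed.

Lemma mt_mono (alpha : 'I_n -> R) : valid_alpha alpha ->
  forall t k, mt W r alpha t k <= mt W r alpha t.+1 k.
Proof.
move=> Hv t; elim: t => [|t IH] k.
  rewrite mtS; under eq_bigr => j _ do rewrite mt0.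
  rewrite mt0 -subr_ge0; have := c0_ge0 Hv k; congr (_ <= _); ring.
rewrite [X in _ <= X]mtS [X in X <= _]mtS lerD2l.
apply: ler_wpM2l; first exact: alpha_ge0.
apply: ler_sum => j _; apply: ler_wpM2l; [exact: W_ge0 | exact: IH].
Qed.

End Key.

End Helpers.
Import Helpers.

Theorem mainTheorem6 (R : realType) (n : nat) (E : rel 'I_n) (W : 'M[R]_n)
    (r alpha beta : 'I_n -> R) :
  contractor_network E W r alpha beta ->
  (forall i, intermediary E i -> r i <= \sum_(j < n) W i j * r j) ->
  [/\ (forall t i, mt W r alpha t i <= mt W r alpha t.+1 i),
      (forall t, expLoss W r alpha beta t <= expLoss W r alpha beta t.+1),
      (forall i, r i <= mlim W r alpha i 0),
      expLoss W r alpha beta 0 <= \sum_(i < n) beta i * mlim W r alpha i 0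
    & forall i, intermediary E i -> forall a : R, 0 < a < 1 ->
        let Aa := Amx (alpha_upd alpha i a) in
        let dm := invmx (1%:M - Aa *m W) *m
                  (delta_mx i i *m (W *m mlim W r (alpha_upd alpha i a) - rcol r)) in
        forall k : 'I_n,
          is_derive a 1 (fun b : R => mlim W r (alpha_upd alpha i b) k 0) (dm k 0)
          /\ 0 <= dm k 0].
Proof.
move=> [Hinc [[HWp [HW0 HWs]] [[Hr01 Hr0] [[h1 [h2 h3]] [Hb0 Hbpo]]]]] Hr.
have Hv : valid_alpha E alpha by split.
have Hmono := mt_mono HWp HW0 Hr01 Hr0 Hr Hv.
split.
- exact: Hmono.
- move=> t; rewrite !expLossE; apply: ler_sum => j _.
  by apply: ler_wpM2l; [exact: Hb0 | exact: Hmono].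
- exact: (mlim_ge_r Hinc HWp HW0 HWs Hr01 Hr0 Hr Hv).
- rewrite expLossE; apply: ler_sum => j _; rewrite mt0.
  apply: ler_wpM2l; first exact: Hb0.
  exact: (mlim_ge_r Hinc HWp HW0 HWs Hr01 Hr0 Hr Hv).
- move=> i hi a ha Aa dm k; split.
  + exact: (deriv_main Hinc HWp HW0 HWs r k Hv hi ha).
  + exact: (dm_ge0 Hinc HWp HW0 HWs Hr01 Hr0 Hr k Hv hi ha).
Qed.
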